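(* Let $H=\Theta(2,4,4,4)$ and $G=H^2$. Then $G$ is equitably $6$-choosable.
   Context: $\Theta(l_1,\ldots,l_m)$ denotes the graph consisting of two vertices $u,w$ joined by $m$ internally disjoint paths of lengths $l_1,\ldots,l_m$. For a graph $H$, $H^2$ has vertex set $V(H)$ with two vertices adjacent iff their distance in $H$ is 1 or 2. A $k$-assignment $L$ assigns to each vertex a set of exactly $k$ colors; an equitable $L$-coloring of $G$ is a proper coloring $f$ with $f(v)\in L(v)$ such that no color is used more than $\lceil |V(G)|/k\rceil$ times; $G$ is equitably $k$-choosable if it has an equitable $L$-coloring for every $k$-assignment $L$. *)

(* Defs.v *)
From mathcomp Require Import all_boot.
Set Implicit Arguments. Unset Strict Implicit. Unset Printing Implicit Defensive.

(* Vertices: inl true = u, inl false = w, and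
   inr (existT i k) = the (k+1)-th vertex (k : 'I_(l_i - 1)) on the i-th path,
   i.e. path i is  u = p_0, p_1, ..., p_{l_i - 1}, p_{l_i} = w. *)
Definition theta_len (ls : seq nat) (i : 'I_(size ls)) : nat := nth 0 ls i.

Definition theta_vertex (ls : seq nat) : finType :=
  (bool + {i : 'I_(size ls) & 'I_(theta_len i).-1})%type.

Definition theta_pos (ls : seq nat) (i : 'I_(size ls)) (v : theta_vertex ls)
  : option nat :=
  match v with
  | inl true => Some 0
  | inl false => Some (theta_len i)
  | inr (existT j k) => if j == i then Some k.+1 else None
  end.

Definition theta_adj (ls : seq nat) : rel (theta_vertex ls) :=
  fun x y => [exists i : 'I_(size ls),
    match theta_pos i x, theta_pos i y with
    | Some a, Some b => (a.+1 == b) || (b.+1 == a)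
    | _, _ => false
    end].

Definition graph_square (T : finType) (e : rel T) : rel T :=
  fun x y => (x != y) && (e x y || [exists z, e x z && e z y]).

(* An equitable L-colouring is a proper colouring
   f with f v in L v, each colour used at most ceil(|V|/k) times. *)
Definition is_k_assignment (T : finType) (k : nat) (L : T -> seq nat) : Prop :=
  forall v, uniq (L v) /\ size (L v) = k.

Definition equitable_L_coloring (T : finType) (e : rel T) (k : nat)
    (L : T -> seq nat) (f : T -> nat) : Prop :=
  (forall v, f v \in L v) /\
  (forall x y, e x y -> f x != f y) /\
  (forall c : nat, #|[pred v | f v == c]| <= (#|T| + k - 1) %/ k).

Definition equitably_choosable (T : finType) (e : rel T) (k : nat) : Prop :=
  forall L : T -> seq nat, is_k_assignment k L ->
    exists f : T -> nat, equitable_L_coloring e k L f.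

(* Main.v *)
Require Import Defs.
From mathcomp Require Import all_boot.
From mathcomp Require Import finmap zify.
Set Implicit Arguments. Unset Strict Implicit. Unset Printing Implicit Defensive.
Local Open Scope fset_scope.

Section HallSec.
Variable I : finType.
Implicit Types (L : I -> {fset nat}) (A B C : {set I}).

Definition U L B : {fset nat} := \bigcup_(i <- enum B) L i.

Lemma memU L B c : reflect (exists2 i, i \in B & c \in L i) (c \in U L B).
Proof.
apply: (iffP (bigfcupP _ _ _ _)) => [[i /andP[]]|[i iB ci]].
  by rewrite mem_enum => iB _ ci; exists i.
by exists i; rewrite ?mem_enum ?iB.
Qed.

Lemma U_sub L B C : B \subset C -> U L B `<=` U L C.
Proof.
move=> /subsetP BC; apply/fsubsetP => c /memU [i iB ci].
by apply/memU; exists i; rewrite ?BC.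
Qed.

Lemma U_setU L B C : U L (B :|: C) = U L B `|` U L C.
Proof.
apply/fsetP => c; rewrite in_fsetU; apply/memU/orP.
  by move=> [i]; rewrite in_setU => /orP[] iB ci; [left|right]; apply/memU; exists i.
by move=> [] /memU [i iB ci]; exists i; rewrite // in_setU iB ?orbT.
Qed.

Lemma U_D L X C : U (fun i => L i `\` X) C = U L C `\` X.
Proof.
apply/fsetP => c; rewrite in_fsetD; apply/memU/andP.
  move=> [i iC]; rewrite in_fsetD => /andP[cX ci]; split=> //.
  by apply/memU; exists i.
move=> [cX /memU [i iC ci]]; exists i => //; by rewrite in_fsetD cX ci.
Qed.

Lemma U1 L i : U L [set i] = L i.
Proof.
apply/fsetP => c; apply/memU/idP; first by move=> [j]; rewrite in_set1 => /eqP->.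
by move=> ci; exists i; rewrite ?in_set1.
Qed.

Lemma card_fsUD (X Y : {fset nat}) : #|` X `|` Y| = (#|` X| + #|` Y `\` X|)%N.
Proof.
have h1 := cardfsUI X Y. have h2 := cardfsID X Y.
rewrite fsetIC in h1. lia.
Qed.

Definition hall L A := forall B, B \subset A -> #|B| <= #|` U L B|.

Theorem hall_thm n : forall L A, #|A| <= n -> hall L A ->
  exists f : I -> nat, (forall i, i \in A -> f i \in L i) /\ {in A &, injective f}.
Proof.
elim: n => [|n IH] L A.
  rewrite leqn0 cards_eq0 => /eqP -> _.
  by exists (fun _ => 0); split=> [i|i j]; rewrite in_set0.
move=> cA hA.
have [crit|nocrit] := boolP [exists B : {set I},
   [&& B \proper A, B != set0 & #|` U L B| <= #|B|]].
- move: crit => /existsP [B /and3P [BA Bn0 cB]].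
  have sBA := proper_sub BA.
  have [f1 [f1L f1i]] : exists f, (forall i, i \in B -> f i \in L i) /\ {in B &, injective f}.
    apply: (IH L B).
      by have := proper_card BA; lia.
    by move=> C CB; apply: hA; apply: subset_trans CB sBA.
  pose L' := fun i => L i `\` U L B.
  have [f2 [f2L f2i]] : exists f, (forall i, i \in A :\: B -> f i \in L' i) /\
       {in A :\: B &, injective f}.
    apply: (IH L' (A :\: B)).
      have := cardsD A B; rewrite (setIidPr sBA).
      have : 0 < #|B| by rewrite card_gt0.
      lia.
    move=> C CAB.
    rewrite /L' U_D.
    have dBC : B :&: C = set0.
      apply/setP => x; rewrite in_setI in_set0; apply/negP => /andP[xB xC].
      by move/subsetP: CAB => /(_ x xC); rewrite in_setD xB.
    have hBC := hA (B :|: C).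
    rewrite cardsU dBC cards0 subn0 U_setU card_fsUD in hBC.
    have : B :|: C \subset A.
      rewrite subUset sBA /=; apply: subset_trans CAB _; exact: subsetDl.
    move=> /hBC; lia.
  exists (fun i => if i \in B then f1 i else f2 i); split.
    move=> i iA; case: ifP => iB; first exact: f1L.
    have : f2 i \in L' i by apply: f2L; rewrite in_setD iB.
    by rewrite in_fsetD => /andP[].
  move=> i j iA jA /=.
  have UB : forall k, k \in B -> f1 k \in U L B.
    by move=> k kB; apply/memU; exists k => //; apply: f1L.
  have nUB : forall k, k \in A -> k \notin B -> f2 k \notin U L B.
    move=> k kA kB; have : f2 k \in L' k by apply: f2L; rewrite in_setD kB.
    by rewrite in_fsetD => /andP[].
  case: ifP => iB; case: ifP => jB.
  + exact: f1i.
  + move=> e; move: (UB i iB); rewrite e => h.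
    by move: (nUB j jA (negbT jB)); rewrite h.
  + move=> e; move: (UB j jB); rewrite -e => h.
    by move: (nUB i iA (negbT iB)); rewrite h.
  + by apply: f2i; rewrite in_setD ?iB ?jB.
- have [A0|An0] := eqVneq A set0.
    by exists (fun _ => 0); split=> [i|i j]; rewrite A0 in_set0.
  have [i0 i0A] : exists i0, i0 \in A by apply/set0Pn.
  have : 0 < #|` L i0|.
    have := hA [set i0]; rewrite U1 cards1 sub1set; exact.
  rewrite cardfs_gt0 => /fset0Pn [c ci0].
  pose L' := fun i => L i `\` [fset c].
  have [f' [f'L f'i]] : exists f, (forall i, i \in A :\ i0 -> f i \in L' i) /\
       {in A :\ i0 &, injective f}.
    apply: (IH L' (A :\ i0)).
      by have := cardsD1 i0 A; rewrite i0A; lia.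
    move=> C CA.
    have [C0|Cn0] := eqVneq C set0; first by rewrite C0 cards0.
    have CP : C \proper A.
      apply/properP; split.
        by apply: subset_trans CA _; exact: subsetDl.
      by exists i0 => //; apply/negP => /(subsetP CA); rewrite in_setD1 eqxx.
    move: nocrit => /existsPn /(_ C); rewrite CP Cn0 /= -ltnNge => hC.
    rewrite /L' U_D.
    have := cardfsD1 c (U L C).
    case: (c \in U L C) => /=; lia.
  exists (fun i => if i == i0 then c else f' i); split.
    move=> i iA; case: eqP => [->//|/eqP ni0].
    have : f' i \in L' i by apply: f'L; rewrite in_setD1 ni0.
    by rewrite in_fsetD => /andP[].
  have nc : forall k, k \in A -> k != i0 -> f' k != c.
    move=> k kA kn; have : f' k \in L' k by apply: f'L; rewrite in_setD1 kn.
    by rewrite in_fsetD in_fset1 => /andP[].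
  move=> i j iA jA /=.
  case: eqP => [->|/eqP ni]; case: eqP => [->//|/eqP nj].
  + by move=> e; move: (nc j jA nj); rewrite -e eqxx.
  + by move=> e; move: (nc i iA ni); rewrite e eqxx.
  + by apply: f'i; rewrite in_setD1 ?ni ?nj.
Qed.
End HallSec.

Section ERT.
Variable I : finType.
Variable p : I -> I.
Hypothesis pK : forall i, p (p i) = i.
Hypothesis pN : forall i, p i != i.

Lemma p_inj : injective p.
Proof. exact: can_inj pK. Qed.

Theorem ert m : forall (L : I -> {fset nat}) (A : {set I}),
  #|A| = m.*2 -> (forall i, i \in A -> p i \in A) ->
  (forall i, i \in A -> m <= #|` L i|) ->
  exists f : I -> nat, (forall i, i \in A -> f i \in L i) /\
    (forall i j, i \in A -> j \in A -> f i = f j -> j = i \/ j = p i).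
Proof.
elim: m => [|m IH] L A cA clA szL.
  move: cA => /eqP; rewrite cards_eq0 => /eqP A0.
  by exists (fun _ => 0); split=> [i|i j]; rewrite A0 in_set0.
have [inter|disj] := boolP [exists i, (i \in A) && (L i `&` L (p i) != fset0)%fset].
- move: inter => /existsP [i /andP [iA /fset0Pn [c]]]; rewrite in_fsetI => /andP [ci cpi].
  pose A' := A :\ i :\ p i.
  pose L' := fun j => (L j `\` [fset c])%fset.
  have piA := clA i iA.
  have memA' : forall j, (j \in A') = [&& j != p i, j != i & j \in A].
    by move=> j; rewrite !in_setD1.
  have [f' [f'L f'c]] : exists f : I -> nat, (forall j, j \in A' -> f j \in L' j) /\
    (forall j k, j \in A' -> k \in A' -> f j = f k -> k = j \/ k = p j).
    apply: IH.
    - have h1 := cardsD1 i A. have h2 := cardsD1 (p i) (A :\ i).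
      rewrite iA in h1. rewrite in_setD1 (negbTE (pN i)) piA in h2.
      rewrite /A'. move: cA; rewrite doubleS. lia.
    - move=> j; rewrite !memA' => /and3P [jpi ji jA].
      rewrite clA // andbT; apply/andP; split.
        by apply/negP => /eqP /(congr1 p); rewrite !pK => e; rewrite e eqxx in ji.
      by apply/negP => /eqP e; rewrite -e pK eqxx in jpi.
    - move=> j; rewrite memA' => /and3P [_ _ jA].
      have := szL j jA. have := cardfsD1 c (L j). rewrite /L'.
      case: (c \in L j) => /=; lia.
  exists (fun j => if (j == i) || (j == p i) then c else f' j); split.
    move=> j jA; case: ifP => [/orP [] /eqP -> //|/norP [ji jpi]].
    have : f' j \in L' j by apply: f'L; rewrite memA' ji jpi.
    by rewrite in_fsetD => /andP [].
  have nc : forall j, j \in A -> ~~ ((j == i) || (j == p i)) -> f' j != c.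
    move=> j jA /norP [ji jpi]; have : f' j \in L' j by apply: f'L; rewrite memA' ji jpi.
    by rewrite in_fsetD in_fset1 => /andP [].
  move=> j k jA kA.
  case: ifP => hj; case: ifP => hk.
  + move=> _; move: hj hk => /orP [] /eqP -> /orP [] /eqP ->; rewrite ?pK; by [left|right|right|left].
  + by move=> e; move: (nc k kA (negbT hk)); rewrite -e eqxx.
  + by move=> e; move: (nc j jA (negbT hj)); rewrite e eqxx.
  + by apply: f'c; rewrite memA'; [move/norP: hj => [-> ->]|move/norP: hk => [-> ->]].
- move: disj => /existsPn disj.
  have dij : forall i, i \in A -> (L i `&` L (p i) = fset0)%fset.
    by move=> i iA; move: (disj i); rewrite iA /= negbK => /eqP.
  have [f [fL fi]] : exists f : I -> nat, (forall i, i \in A -> f i \in L i) /\ {in A &, injective f}.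
    apply: (@hall_thm _ #|A|) => // B BA.
    have [/existsP [i /andP [iB piB]]|nopair] := boolP [exists i, (i \in B) && (p i \in B)].
      have iA : i \in A := subsetP BA i iB.
      have sub : (L i `|` L (p i) `<=` U L B)%fset.
        apply/fsubsetP => c; rewrite in_fsetU => /orP [] h; apply/memU.
          by exists i.
        by exists (p i).
      have := fsubset_leq_card sub.
      rewrite cardfsU (dij i iA) cardfs0 subn0.
      have := szL i iA. have := szL (p i) (clA i iA). have := subset_leq_card BA.
      rewrite cA doubleS. lia.
    move: nopair => /existsPn nopair.
    have [B0|[i iB]] := set_0Vmem B; first by rewrite B0 cards0.
    have : #|B| + #|p @: B| <= #|A|.
      have hI : B :&: p @: B = set0.
        apply/setP => x; rewrite in_setI in_set0; apply/negP => /andP [xB /imsetP [y yB ey]].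
        by move: (nopair y); rewrite yB -ey xB.
      have := cardsU B (p @: B); rewrite hI cards0 subn0 => <-.
      apply: subset_leq_card; rewrite subUset BA /=.
      apply/subsetP => x /imsetP [y yB ->]; apply: clA; exact: subsetP BA y yB.
    rewrite card_imset; last exact: p_inj.
    have sub : (L i `<=` U L B)%fset.
      by apply/fsubsetP => c ci; apply/memU; exists i.
    have := fsubset_leq_card sub. have := szL i (subsetP BA i iB).
    rewrite cA doubleS. lia.
  exists f; split => // i j iA jA e; left; symmetry; exact: fi.
Qed.
End ERT.

Definition LS := [:: 2; 4; 4; 4].
Definition TV := theta_vertex LS.
Definition i0 : 'I_(size LS) := @Ordinal 4 0 isT.
Definition i1 : 'I_(size LS) := @Ordinal 4 1 isT.
Definition i2 : 'I_(size LS) := @Ordinal 4 2 isT.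
Definition i3 : 'I_(size LS) := @Ordinal 4 3 isT.
Definition mk (i : 'I_(size LS)) (k : nat) (H : k < (theta_len i).-1) : TV :=
  inr (existT _ i (Ordinal H)).

Definition code (v : TV) : nat :=
  match v with
  | inl true => 0
  | inl false => 1
  | inr (existT i k) => 2 + 3 * i + k
  end.

Definition decode (n : nat) : TV :=
  match n with
  | 0 => inl true
  | 1 => inl false
  | 2 => @mk i0 0 isT
  | 5 => @mk i1 0 isT
  | 6 => @mk i1 1 isT
  | 7 => @mk i1 2 isT
  | 8 => @mk i2 0 isT
  | 9 => @mk i2 1 isT
  | 10 => @mk i2 2 isT
  | 11 => @mk i3 0 isT
  | 12 => @mk i3 1 isT
  | 13 => @mk i3 2 isT
  | _ => inl true
  end.

Definition codes := [:: 0; 1; 2; 5; 6; 7; 8; 9; 10; 11; 12; 13].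

Lemma decode_code x : decode (code x) = x.
Proof.
case: x => [[]|[[i Hi] [k Hk]]] //.
do 4?[case: i Hi Hk => [|i] Hi Hk]; last by [].
all: do 3?[case: k Hk => [|k] Hk]; try by [].
all: rewrite /decode /mk /=; move: Hk; rewrite [Hi](bool_irrelevance _ isT) => Hk;
  by rewrite [Hk](bool_irrelevance _ isT).
Qed.

Lemma code_in x : code x \in codes.
Proof.
case: x => [[]|[[i Hi] [k Hk]]] //.
do 4?[case: i Hi Hk => [|i] Hi Hk]; last by [].
all: do 3?[case: k Hk => [|k] Hk]; by [].
Qed.

Definition partner (n : nat) : nat :=
  match n with
  | 2 => 6 | 6 => 2 | 9 => 12 | 12 => 9 | 0 => 7 | 7 => 0
  | 1 => 8 | 8 => 1 | 11 => 10 | 10 => 11 | 5 => 13 | 13 => 5 | _ => n end.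

Definition pp (x : TV) : TV := decode (partner (code x)).

Definition tbody (x y : TV) (i : 'I_(size LS)) : bool :=
  match theta_pos i x, theta_pos i y with
  | Some a, Some b => (a.+1 == b) || (b.+1 == a)
  | _, _ => false
  end.

Definition ta4 (x y : TV) := [|| tbody x y i0, tbody x y i1, tbody x y i2 | tbody x y i3].

Lemma ex4 (P : pred 'I_4) : [exists i, P i] = [|| P i0, P i1, P i2 | P i3].
Proof.
apply/existsP/idP => [[[i Hi]]|]; last first.
  by case/or4P => h; eexists; exact: h.
  do 4?[case: i Hi => [|i] Hi]; last by [].
  all: rewrite [Hi](bool_irrelevance _ isT) => ->; by rewrite ?orbT.
Qed.

Lemma ta_eq x y : theta_adj x y = ta4 x y.
Proof. by rewrite /theta_adj ex4. Qed.

Lemma check1 : all (fun n => (code (decode n) == n) && (partner n \in codes)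
   && (partner (partner n) == n) && (partner n != n)
   && ~~ ta4 (decode n) (decode (partner n))
   && all (fun m => ~~ (ta4 (decode n) (decode m) && ta4 (decode m) (decode (partner n)))) codes) codes.
Proof. vm_compute. reflexivity. Qed.

Lemma chk n : n \in codes -> (code (decode n) == n) && (partner n \in codes)
   && (partner (partner n) == n) && (partner n != n)
   && ~~ ta4 (decode n) (decode (partner n))
   && all (fun m => ~~ (ta4 (decode n) (decode m) && ta4 (decode m) (decode (partner n)))) codes.
Proof. by move=> h; move/allP: check1 => /(_ n h). Qed.

Lemma code_decode n : n \in codes -> code (decode n) = n.
Proof. by move/chk => /andP[/andP[/andP[/andP[/andP[/eqP]]]]]. Qed.

Lemma ppK x : pp (pp x) = x.
Proof.
have := chk (code_in x) => /andP[/andP[/andP[/andP[/andP[_ h1] /eqP h2] _] _] _].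
by rewrite /pp code_decode // h2 decode_code.
Qed.

Lemma ppN x : pp x != x.
Proof.
have := chk (code_in x) => /andP[/andP[/andP[/andP[/andP[_ h1] _] h3] _] _].
apply/eqP => e; have := congr1 code e; rewrite /pp code_decode // => e'.
by rewrite e' eqxx in h3.
Qed.

Lemma pp_nonadj x : ~~ graph_square (@theta_adj LS) x (pp x).
Proof.
have := chk (code_in x) => /andP[/andP[_ h1] /allP h2].
rewrite /graph_square negb_and; apply/orP; right; rewrite negb_or; apply/andP; split.
  by rewrite ta_eq /pp; rewrite decode_code in h1.
apply/existsP => [[z /andP[hz1 hz2]]].
move: (h2 _ (code_in z)); rewrite !decode_code -!ta_eq hz1 /=.
by rewrite /pp in hz2; rewrite hz2.
Qed.

Lemma card_TV : #|TV| = 12.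
Proof.
have u : uniq (map decode codes).
  rewrite map_inj_in_uniq //.
  by move=> m n hm hn e; rewrite -(code_decode hm) -(code_decode hn) e.
have : size (map decode codes) = 12 by [].
move=> <-; rewrite -(card_uniqP u).
apply: eq_card => x; apply/esym; apply/mapP; exists (code x); first exact: code_in.
by rewrite decode_code.
Qed.

Theorem lemma3p6 :
  equitably_choosable (graph_square (@theta_adj [:: 2; 4; 4; 4])) 6.
Proof.
move=> L kL.
pose LF := fun v : TV => seq_fset tt (L v).
have hc : #|[set: TV]| = 6.*2 by rewrite cardsT card_TV.
have hs : forall i, i \in [set: TV] -> 6 <= #|` LF i|.
  by move=> i _; rewrite /LF size_seq_fset undup_id; case: (kL i) => // _ ->.
have [f [fL fP]] := @ert TV pp ppK ppN 6 LF [set: TV] hc (fun i _ => in_setT _) hs.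
exists f; split; [|split].
- by move=> v; have := fL v (in_setT v); rewrite /LF seq_fsetE.
- move=> x y hxy; apply/eqP => e.
  case: (fP x y (in_setT x) (in_setT y) e) => ey.
    by move: hxy; rewrite /graph_square ey eqxx.
  by move: hxy; rewrite ey; move/negP: (pp_nonadj x).
- move=> c; have -> : #|TV| = 12 := card_TV.
  case: (pickP [pred v | f v == c]) => [v0 /= /eqP h0|none]; last first.
    by rewrite (eq_card0 none).
  apply: (@leq_trans #|[set v0; pp v0]|); last by rewrite cards2; case: (v0 != pp v0).
  apply: subset_leq_card; apply/subsetP => v; rewrite inE /= => /eqP hv.
  rewrite !inE; case: (fP v0 v (in_setT _) (in_setT _) (etrans h0 (esym hv))) => ->;
  by rewrite eqxx ?orbT.
Qed.
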